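(* Let $A, B, C, F \in \mathbb{R}^{n\times n}$ with $A$ invertible, and suppose $\rho\left(\lvert CA^{-1}B\rvert\right) < 1$. Then the matrix equation $$AX + B\lvert CX\rvert = F$$ has exactly one solution $X \in \mathbb{R}^{n\times n}$.
   Context: $\rho(\cdot)$ is the spectral radius and $\lvert M\rvert$ the entrywise absolute value of a matrix $M$. *)

(* Defs.v *)
From HB Require Import structures.
From mathcomp Require Import all_boot all_order all_algebra.
From mathcomp Require Import complex.
From mathcomp Require Import classical_sets reals.
Set Implicit Arguments. Unset Strict Implicit. Unset Printing Implicit Defensive.
Import Order.TTheory GRing.Theory Num.Theory.
Local Open Scope ring_scope.
Local Open Scope classical_set_scope.

Definition mxabs (R : realType) (m n : nat) (M : 'M[R]_(m, n)) : 'M[R]_(m, n) :=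
  map_mx (fun x => `|x|) M.

Definition complex_eigenvalue (R : realType) (n : nat) (M : 'M[R]_n) (l : R[i]) : bool :=
  eigenvalue (map_mx (fun x : R => x%:C%C) M) l.

Definition spectral_radius (R : realType) (n : nat) (M : 'M[R]_n) : R :=
  sup [set Normc.normc l | l in [set l : R[i] | complex_eigenvalue M l]].

(* Main.v *)
Require Import Defs.
From HB Require Import structures.
From mathcomp Require Import all_boot all_order all_algebra.
From mathcomp Require Import complex.
From mathcomp Require Import real_closed.polyrcf.
From mathcomp Require Import ring lra.
From mathcomp Require Import all_classical all_reals all_analysis.
Import Order.TTheory GRing.Theory Num.Theory.
Local Open Scope ring_scope.
Set Implicit Arguments. Unset Strict Implicit.

Definition MM (R : realType) n := 'M[R]_(n,n).
HB.instance Definition _ (R : realType) n := NormedModule.copy (MM R n) 'M[R]_(n,n).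
HB.instance Definition _ (R : realType) n := isPointed.Build (MM R n) 0.
HB.instance Definition _ (R : realType) n := Uniform_isComplete.Build (MM R n) (@mx_complete R n n).

Lemma mx_norm_ge (R : realType) n (Z : MM R n) i j : `|Z i j| <= `|Z|.
Proof.
rewrite [X in _ <= X]/Num.norm /= mx_normrE.
by apply: (le_bigmax _ _ (i, j)).
Qed.

Lemma mx_norm_le (R : realType) n (Z : MM R n) (b : R) : 0 <= b ->
  (forall i j, `|Z i j| <= b) -> `|Z| <= b.
Proof.
move=> b0 H; rewrite [X in X <= _]/Num.norm /= mx_normrE.
by apply: bigmax_le => // -[i j] _; apply: H.
Qed.


Lemma fix_exists (R : realType) n (N H : 'M[R]_n) (c : R) : 0 <= c -> c < 1 ->
  (forall i, \sum_k `|N i k| <= c) -> exists! Z : 'M[R]_n, Z = H - N *m mxabs Z.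
Proof.
move=> c0 c1 HN.
pose f := fun Z : MM R n => (H - N *m mxabs Z : MM R n).
have Hf : forall x, (@setT (MM R n)) x -> (@setT (MM R n)) (f x) by [].
pose F := @isFun.Build _ _ (@setT (MM R n)) (@setT (MM R n)) f Hf.
pose g : {fun (@setT (MM R n)) >-> (@setT (MM R n))} := HB.pack f F.
have ctr : is_contraction g.
  exists (NngNum c0); split => //=.
  move=> [Z1 Z2] _ /=.
  apply: mx_norm_le; first by rewrite mulr_ge0.
  move=> i j; rewrite /f !mxE.
  rewrite opprB addrC addrA subrK -sumrB.
  apply: (le_trans (ler_norm_sum _ _ _)).
  apply: (@le_trans _ _ (\sum_k `|N i k| * `|Z1 - Z2|)).
    apply: ler_sum => k _; rewrite !mxE -mulrBr normrM ler_wpM2l //.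
    apply: (le_trans (ler_dist_dist _ _)).
    rewrite distrC.
    by have := @mx_norm_ge _ _ (Z1 - Z2) k j; rewrite !mxE.
  by rewrite -mulr_suml ler_wpM2r.
have [] := @banach_fixed_point R (MM R n) (@setT (MM R n)) g ctr closedT.
  by exists 0.
move=> Z _ HZ; exists Z; split; first exact HZ.
move=> Z' HZ'.
exact: (@contraction_fixpoint_unique R (MM R n) (@setT (MM R n)) g Z Z' ctr I I HZ HZ').
Qed.

Definition Good (R : realType) n (P : 'M[R]_n) (t : R) :=
  exists w : 'cV[R]_n, (forall i, 0 < w i 0) /\ (forall i, (P *m w) i 0 < t * w i 0).

Lemma Good_up (R : realType) n (P : 'M[R]_n) t t' : Good P t -> t <= t' -> Good P t'.
Proof.
move=> [w [w0 Hw]] tt'; exists w; split => // i.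
by apply: (lt_le_trans (Hw i)); rewrite ler_wpM2r // ltW.
Qed.

Lemma Good_big (R : realType) n (P : 'M[R]_n) :
  (forall i j, 0 <= P i j) -> Good P (1 + \sum_i \sum_j P i j).
Proof.
move=> P0; exists (const_mx 1); split => [i|i]; first by rewrite mxE.
rewrite mxE mxE mulr1.
under eq_bigr do rewrite mxE mulr1.
rewrite ltr_pwDl //.
rewrite [X in _ <= X](bigD1 i) //=. by rewrite lerDl sumr_ge0 // => k _; rewrite sumr_ge0.
Qed.

Lemma Good_open (R : realType) n (P : 'M[R]_n) t :
  Good P t -> exists2 t', t' < t & Good P t'.
Proof.
move=> [w [w0 Hw]].
pose e i := t * w i 0 - (P *m w) i 0.
have e0 i : 0 < e i by rewrite subr_gt0.
pose S := \sum_i (w i 0 / e i).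
have S0 : 0 <= S by rewrite sumr_ge0 // => i _; rewrite divr_ge0 // ltW.
pose d := (1 + S)^-1.
have d0 : 0 < d by rewrite invr_gt0 ltr_pwDl.
exists (t - d); first by rewrite ltrBlDr ltrDl.
exists w; split => // i.
have : d < e i / w i 0.
  rewrite /d -[e i / w i 0]invf_div ltf_pV2 ?posrE ?ltr_pwDl ?divr_gt0 //.
  by rewrite /S (bigD1 i) //= lerDl sumr_ge0 // => k _; rewrite divr_ge0 // ltW.
rewrite ltr_pdivlMr // => H.
by rewrite mulrBl ltrBrDl -ltrBrDr.
Qed.

Lemma Good_minentry (R : realType) n (P : 'M[R]_n) t :
  (forall i j, 0 <= P i j) -> Good P t ->
  forall x : 'cV[R]_n, (forall i, 0 <= ((t%:M - P) *m x) i 0) -> forall i, 0 <= x i 0.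
Proof.
move=> P0 [w [w0 Hw]] x Hx i0.
rewrite leNgt; apply/negP => xneg.
have [i _ Hi] := @arg_minP _ _ 'I_n i0 xpredT (fun k => x k 0 / w k 0) isT.
set m := x i 0 / w i 0 in Hi.
have m0 : m < 0.
  apply: (le_lt_trans (Hi i0 isT)).
  by rewrite pmulr_llt0 ?invr_gt0.
have xk k : m * w k 0 <= x k 0 by rewrite -ler_pdivlMr //; exact: Hi.
have := Hx i.
rewrite mulmxBl mul_scalar_mx [_ i 0]mxE [(t *: x) i 0]mxE [X in _ + X]mxE.
have xi : x i 0 = m * w i 0 by rewrite /m divfK // gt_eqF.
have : m * (P *m w) i 0 <= (P *m x) i 0.
  rewrite !mxE mulr_sumr; apply: ler_sum => k _.
  by rewrite mulrCA ler_wpM2l ?P0 ?xk.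
move=> H1; rewrite subr_ge0 => H2.
have H3 : m * (t * w i 0) < m * (P *m w) i 0 by rewrite ltr_nM2l.
have : t * x i 0 < t * x i 0.
  apply: (lt_le_trans _ H2); apply: (lt_le_trans _ H1).
  by rewrite {1}xi mulrCA.
by rewrite ltxx.
Qed.
Lemma eval_cpmx (R : comNzRingType) n (P : 'M[R]_n) (s : R) :
  map_mx (horner_eval s) (char_poly_mx P) = s%:M - P.
Proof.
apply/matrixP => i j; rewrite !mxE /= horner_evalE hornerD hornerN hornerC.
by case: (i == j); rewrite ?mulr1n ?mulr0n ?hornerX ?horner0. Qed.

Lemma eval_cp (R : comNzRingType) n (P : 'M[R]_n) (s : R) :
  (char_poly P).[s] = \det (s%:M - P).
Proof. by rewrite -eval_cpmx det_map_mx. Qed.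

Lemma eval_adj (R : comNzRingType) n (P : 'M[R]_n) (s : R) i j :
  (\adj (char_poly_mx P) i j).[s] = \adj (s%:M - P) i j.
Proof. by rewrite -eval_cpmx -map_mx_adj [in RHS]mxE. Qed.

Lemma Good_closed (R : realType) n (P : 'M[R]_n) t0 :
  (forall i j, 0 <= P i j) -> \det (t0%:M - P) != 0 ->
  (forall s, t0 < s -> Good P s) -> Good P t0.
Proof.
move=> P0 dt0 HG.
pose one : 'cV[R]_n := const_mx 1.
pose v (s : R) : 'cV[R]_n := \det (s%:M - P) *: (\adj (s%:M - P) *m one).
have Mv s : (s%:M - P) *m v s = (\det (s%:M - P) ^+ 2) *: one.
  by rewrite /v -scalemxAr mulmxA mul_mx_adj mul_scalar_mx scalerA expr2.
have vpos s : t0 < s -> forall i, 0 <= v s i 0.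
  move=> ts; apply: (Good_minentry P0 (HG s ts)) => i.
  by rewrite Mv !mxE mulr_ge0 ?sqr_ge0.
pose q i := char_poly P * \sum_j \adj (char_poly_mx P) i j.
have qE s i : (q i).[s] = v s i 0.
  rewrite /q hornerM eval_cp horner_sum /v !mxE; congr (_ * _).
  by apply: eq_bigr => j _; rewrite eval_adj /one !mxE mulr1.
have vt0 i : 0 <= v t0 i 0.
  rewrite -qE leNgt; apply/negP => qneg.
  have qn : 0 < - (q i).[t0] by rewrite oppr_gt0.
  have [d d0 Hd] := @poly_cont _ t0 (q i) (- (q i).[t0]) qn.
  have hd : `|t0 + d / 2 - t0| < d.
    rewrite addrAC subrr add0r ger0_norm ?divr_ge0 ?ltW //.
    by rewrite ltr_pdivrMr // ltr_pMr // ltr1n.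
  have td : t0 < t0 + d / 2 by rewrite ltrDl divr_gt0.
  have := vpos (t0 + d / 2) td i.
  rewrite -qE; move: (Hd _ hd); rewrite ltr_norml => /andP[_ H] Hy.
  lra.
have Mvi i : t0 * v t0 i 0 - (P *m v t0) i 0 = \det (t0%:M - P) ^+ 2.
  have := Mv t0; move/matrixP/(_ i 0).
  rewrite mulmxBl mul_scalar_mx => E; rewrite [(P *m _) i 0]mxE; rewrite !mxE in E; rewrite -[RHS]mulr1 -E.
  by congr (_ * _ - _); rewrite /v !mxE.
have dpos : 0 < \det (t0%:M - P) ^+ 2.
  by rewrite lt_neqAle sqr_ge0 eq_sym sqrf_eq0 dt0.
exists (v t0); split => i.
- have Pv : 0 <= (P *m v t0) i 0.
    by rewrite mxE sumr_ge0 // => k _; rewrite mulr_ge0.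
  rewrite lt_neqAle vt0 andbT; apply/eqP => v0.
  by move: (Mvi i); rewrite -v0 mulr0 sub0r => E; move: dpos; rewrite -E oppr_gt0 ltNge Pv.
- by rewrite -subr_gt0 Mvi.
Qed.

Lemma Good_from (R : realType) n (P : 'M[R]_n) c :
  (forall i j, 0 <= P i j) -> (forall t, c <= t -> \det (t%:M - P) != 0) ->
  Good P c.
Proof.
move=> P0 Hdet.
apply: contrapT => Nc.
pose S : set R := (fun t : R => ~ Good P t).
pose T0 := 1 + \sum_i \sum_j P i j.
have ubS : forall x, S x -> x <= T0.
  move=> x Sx; rewrite leNgt; apply/negP => Tx.
  by apply: Sx; apply: Good_up (Good_big P0) (ltW Tx).
have hS : has_sup S by split; [exists c | exists T0 => x /ubS].
have cs : c <= sup S by apply: sup_upper_bound.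
have Gs : forall t, sup S < t -> Good P t.
  move=> t st; apply: contrapT => Nt.
  have := sup_upper_bound hS Nt.
  by rewrite leNgt st.
have [t' t's Gt'] := Good_open (Good_closed P0 (Hdet _ cs) Gs).
have : sup S <= t'.
  apply: ge_sup; first by exists c.
  move=> x Sx; rewrite leNgt; apply/negP => tx.
  by apply: Sx; apply: Good_up Gt' (ltW tx).
by rewrite leNgt t's.
Qed.

Lemma le_sum_seq (R : numDomainType) (T : eqType) (s : seq T) (F : T -> R) x :
  (forall y, 0 <= F y) -> x \in s -> F x <= \sum_(z <- s) F z.
Proof.
move=> F0; elim: s => // a s IH; rewrite in_cons big_cons => /orP[/eqP->|xs].
  by rewrite lerDl sumr_ge0.
by apply: (le_trans (IH xs)); rewrite lerDr.
Qed.

Lemma root_eig (R : realType) n (P : 'M[R]_n) t :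
  root (char_poly P) t -> complex_eigenvalue P (t%:C%C).
Proof.
move=> H; rewrite /complex_eigenvalue eigenvalue_root_char.
rewrite -(map_char_poly (real_complex R)).
exact: (rmorph_root (real_complex R) H).
Qed.

Lemma spec_det (R : realType) n (P : 'M[R]_n) : spectral_radius P < 1 ->
  exists2 c, c < 1 & forall t, c <= t -> \det (t%:M - P) != 0.
Proof.
move=> Hr; set r := spectral_radius P in Hr.
exists ((r + 1) / 2); first by lra.
move=> t ct; apply/negP => /eqP d0.
have ev : complex_eigenvalue P (t%:C%C).
  by apply: root_eig; rewrite /root eval_cp d0.
pose E := [set Normc.normc l | l in [set l | complex_eigenvalue P l]]%classic.
have Et : E (Normc.normc t%:C%C) by exists t%:C%C.
have hE : has_sup E.
  split; first by exists (Normc.normc t%:C%C).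
  have [rs prs] := closed_field_poly_normal (char_poly (map_mx (fun x : R => x%:C%C) P)).
  exists (\sum_(z <- rs) Normc.normc z) => x [l Hl <-].
  apply: le_sum_seq; first by move=> y; case: y => a b; rewrite /Normc.normc sqrtr_ge0.
  move: Hl; rewrite /= /complex_eigenvalue eigenvalue_root_char prs.
  by rewrite (monicP (char_poly_monic _)) scale1r root_prod_XsubC.
have := sup_upper_bound hE Et.
rewrite -/(spectral_radius P) -/r /Normc.normc /= expr0n /= addr0 sqrtr_sqr => tr.
have := ler_norm t.
lra.
Qed.

Lemma fixY (R : realType) n (M G : 'M[R]_n) (w : 'cV[R]_n) c :
  (forall i, 0 < w i 0) -> (forall i, (mxabs M *m w) i 0 < c * w i 0) -> c < 1 ->
  exists! Y : 'M[R]_n, Y = G - M *m mxabs Y.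
Proof.
move=> w0 Hw c1.
have wn0 i : w i 0 != 0 by rewrite gt_eqF.
pose N : 'M[R]_n := \matrix_(i, k) (M i k * w k 0 / w i 0).
pose H : 'M[R]_n := \matrix_(i, j) (G i j / w i 0).
have HN : forall i, \sum_k `|N i k| <= Num.max c 0.
  move=> i; suff Hc : \sum_k `|N i k| <= c by apply: (le_trans Hc); rewrite le_max lexx.
  have -> : \sum_k `|N i k| = (mxabs M *m w) i 0 / w i 0.
    rewrite mxE mulr_suml; apply: eq_bigr => k _.
    by rewrite !mxE normrM normrM (gtr0_norm (w0 k)) normfV (gtr0_norm (w0 i)).
  by rewrite ler_pdivrMr // ltW.
have m0 : 0 <= Num.max c 0 by rewrite le_max lexx orbT.
have m1 : Num.max c 0 < 1 by rewrite gt_max c1 ltr01.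
have [Z [HZ Zu]] := fix_exists H m0 m1 HN.
exists (\matrix_(i, j) (w i 0 * Z i j)); split.
  apply/matrixP => i j.
  rewrite {1}HZ !mxE mulrBr mulr_sumr; congr (_ - _).
    by field; rewrite ?wn0.
  apply: eq_bigr => k _; rewrite !mxE normrM (gtr0_norm (w0 k)).
  by field; rewrite ?wn0.
move=> Y' HY'.
pose Z' : 'M[R]_n := \matrix_(i, j) (Y' i j / w i 0).
have : Z = Z'.
  apply: Zu; apply/matrixP => i j.
  rewrite /Z' [in LHS]mxE {1}HY' !mxE mulrBl mulr_suml; congr (_ - _).
  apply: eq_bigr => k _; rewrite !mxE normrM normfV (gtr0_norm (w0 k)).
  by field; rewrite !wn0.
move=> ->; apply/matrixP => i j; rewrite !mxE.
by field; rewrite !wn0.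
Qed.


Unset Implicit Arguments. Set Strict Implicit.

Theorem theorem4p6 (R : realType) (n : nat) (A B C F : 'M[R]_n) :
  A \in unitmx ->
  spectral_radius (mxabs (C *m invmx A *m B)) < 1 ->
  exists! X : 'M[R]_n, A *m X + B *m mxabs (C *m X) = F.
Proof.
move=> Au Hs.
set M := C *m invmx A *m B in Hs *.
have P0 : forall i j, 0 <= mxabs M i j by move=> i j; rewrite mxE normr_ge0.
have [c c1 Hc] := spec_det Hs.
have [w [w0 Hw]] := Good_from P0 Hc.
have [Y [HY Yu]] := fixY (C *m invmx A *m F) w0 Hw c1.
exists (invmx A *m (F - B *m mxabs Y)); split.
  have CX : C *m (invmx A *m (F - B *m mxabs Y)) = Y.
    by rewrite {2}HY !mulmxBr !mulmxA.
  by rewrite CX mulKVmx // subrK.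
move=> X' HX'.
have AX : A *m X' = F - B *m mxabs (C *m X') by rewrite -HX' addrK.
have X'E : X' = invmx A *m (F - B *m mxabs (C *m X')) by rewrite -AX mulKmx.
have : Y = C *m X'.
  apply: Yu.
  by rewrite {1}X'E !mulmxBr !mulmxA.
by move=> ->; rewrite -X'E.
Qed.
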